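(* Let $\rho$ be an operator on $h$ and let $\rho_0$ denote $\rho$ on slice $0$. Let $\mathcal H_E\cong\mathcal H$ be an environment, $|\Phi^+\rangle=\sum_{\mathbf i}|\mathbf i\rangle|\mathbf i\rangle_E$ (sum over the product basis), and for an operator $A$ on $\mathcal H$ let $$|\mathbf A\rangle:=(A\otimes\mathbb 1_E)|\Phi^+\rangle$$ be its Choi vector. Then, for all operators $O^{(0)},\dots,O^{(N-1)}$ on $h$, $$\Big\langle\big(\textstyle\bigotimes_tO^{(t)}_t\big)^\dagger\Big|\rho_0e^{i\tilde{\mathcal S}}\Big\rangle=\mathrm{tr}\big[\rho\,O^{(N-1)}(\epsilon(N-1))\cdots O^{(1)}(\epsilon)\,O^{(0)}(0)\big],$$ where the left side is the inner product of the Choi vectors of $\big(\bigotimes_tO^{(t)}_t\big)^\dagger$ and of $\rho_0e^{i\tilde{\mathcal S}}$, and $O(s)=e^{isH}Oe^{-isH}$.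
   Context: Bosonic-like setting. Fix integers $d\ge1$, $N\ge1$, a real $\epsilon>0$, and set $T=\epsilon N$. Let $h$ be a $d$-dimensional Hilbert space with orthonormal basis $\{|i\rangle\}$ and trace $\mathrm{tr}$. The space $\mathcal H$. Let $\mathcal H=h^{\otimes N}$, with factors indexed by slices $t=0,\dots,N-1$. $A_t$ denotes $A$ acting on factor $t$, and $\bigotimes_tO^{(t)}_t=O^{(0)}\otimes\dots\otimes O^{(N-1)}$. Quantum action. Let $C$ be the cyclic shift $C|i_0\dots i_{N-1}\rangle=|i_{N-1}i_0\dots i_{N-2}\rangle$, and let $H$ be a hermitian operator on $h$. Define $$e^{i\mathcal S}=C\prod_te^{-i\epsilon H_t},\qquad e^{i\tilde{\mathcal S}}:=e^{iTH_0}e^{i\mathcal S}.$$ *)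

(* Defs.v *)
From HB Require Import structures.
From mathcomp Require Import all_boot all_order all_algebra.
From mathcomp Require Import complex.
From mathcomp Require Import all_classical all_reals all_analysis.
Set Implicit Arguments. Unset Strict Implicit. Unset Printing Implicit Defensive.
Import Order.TTheory GRing.Theory Num.Theory numFieldNormedType.Exports.
Local Open Scope ring_scope.
Local Open Scope classical_set_scope.
Local Open Scope complex_scope.

Section QuantumAction.
Variable R : realType.
Local Notation C := R[i].

Definition iC : C := Complex 0 1.

Definition mpow n (A : 'M[C]_n) (k : nat) : 'M[C]_n := iter k (mulmx A) 1%:M.

Definition mexp_partial n (A : 'M[C]_n) (k : nat) : 'M[C]_n :=
  \sum_(l < k) (l`!%:R)^-1 *: mpow A l.

(* matrix exponential: entrywise limit of the partial sums (limits of real and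
   imaginary parts in R; convergence in C = convergence of both parts) *)
Definition mexp n (A : 'M[C]_n) : 'M[C]_n :=
  \matrix_(i, j)
    Complex (lim (@complex.Re R (mexp_partial A k i j) @[k --> \oo]))
            (lim (@complex.Im R (mexp_partial A k i j) @[k --> \oo])).

Definition adjoint m n (A : 'M[C]_(m, n)) : 'M[C]_(n, m) := (map_mx conjc A)^T.

(* product basis of H = h^{(x) N}: multi-indices i = (i_0,...,i_{N-1}) *)
Definition Idx (d N : nat) := {ffun 'I_N -> 'I_d}.
(* operators on H are #|Idx d N| x #|Idx d N| matrices; a matrix index
   a corresponds to the basis multi-index enum_val a *)
Notation opH d N := ('M[C]_#|{: Idx d N}|).

Definition slice_op d N (t : 'I_N) (A : 'M[C]_d) : opH d N :=
  \matrix_(a, b)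
    (A ((enum_val a : Idx d N) t) ((enum_val b : Idx d N) t) *
     ([forall s : 'I_N, (s != t) ==> ((enum_val a : Idx d N) s == (enum_val b : Idx d N) s)])%:R).

Definition tensor_op d N (O : 'I_N -> 'M[C]_d) : opH d N :=
  \matrix_(a, b) \prod_(t < N) O t ((enum_val a : Idx d N) t) ((enum_val b : Idx d N) t).

(* cyclic shift C |i_0 ... i_{N-1}> = |i_{N-1} i_0 ... i_{N-2}> *)
Definition shift_idx d N (i : Idx d N) : Idx d N := [ffun t => i (ord_pred t)].
Definition cshift d N : opH d N :=
  \matrix_(a, b) ((enum_val a : Idx d N) == shift_idx (enum_val b : Idx d N))%:R.

Definition eiS d N (eps : R) (H : 'M[C]_d) : opH d N :=
  cshift d N *m \big[mulmx/1%:M]_(t < N) mexp ((- iC * eps%:C) *: slice_op t H).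

Definition eiS_tilde d N (t0 : 'I_N) (eps : R) (H : 'M[C]_d) : opH d N :=
  mexp ((iC * (eps * N%:R)%:C) *: slice_op t0 H) *m eiS N eps H.

(* |Phi^+> = sum_i |i>|i>_E  on  H (x) H_E, basis indexed by pairs *)
Definition phi_plus d N (q : Idx d N * Idx d N) : C := (q.1 == q.2)%:R.

Definition choi d N (A : opH d N) (p : Idx d N * Idx d N) : C :=
  \sum_(q : Idx d N * Idx d N)
     (A (enum_rank p.1) (enum_rank q.1) * (p.2 == q.2)%:R) * phi_plus q.

Definition inner d N (u v : Idx d N * Idx d N -> C) : C :=
  \sum_(p : Idx d N * Idx d N) conjc (u p) * v p.

Definition heis d (H : 'M[C]_d) (s : R) (O : 'M[C]_d) : 'M[C]_d :=
  mexp ((iC * s%:C) *: H) *m O *m mexp ((- iC * s%:C) *: H).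

End QuantumAction.

(* Main.v *)
Require Import Defs.
From HB Require Import structures.
From mathcomp Require Import all_boot all_order all_algebra.
From mathcomp Require Import complex.
From mathcomp Require Import all_classical all_reals all_analysis.
From mathcomp Require Import ring lra zify.
Import Order.TTheory GRing.Theory Num.Theory numFieldNormedType.Exports.
Local Open Scope ring_scope.

Module Helpers.
Set Implicit Arguments. Unset Strict Implicit. Unset Printing Implicit Defensive.
Local Open Scope ring_scope.
Local Open Scope classical_set_scope.
Local Open Scope complex_scope.

Section SpSec.
Variables (F : numFieldType) (A : algType F).
Definition Sp (x : A) k := \sum_(l < k) (l`!%:R : F)^-1 *: x ^+ l.
Definition Gt (x y : A) i j := (((i`!%:R : F)^-1 * (j`!%:R)^-1) *: (x ^+ i * y ^+ j)).

Lemma Sp_prod x y k : Sp x k * Sp y k = \sum_(i < k) \sum_(j < k) Gt x y i j.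
Proof.
rewrite /Sp mulr_suml; apply: eq_bigr => i _; rewrite mulr_sumr; apply: eq_bigr => j _.
by rewrite /Gt -scalerAl -scalerAr scalerA.
Qed.

Lemma fact_neq0 n : (n`!%:R : F) != 0.
Proof. by rewrite pnatr_eq0 -lt0n fact_gt0. Qed.

Lemma binom_coef k i : (i <= k)%N ->
  (k`!%:R : F)^-1 * 'C(k, i)%:R = ((k - i)`!%:R)^-1 * (i`!%:R)^-1.
Proof.
move=> hik; have := bin_fact hik; move/(congr1 (fun n => n%:R : F)); rewrite !natrM => h.
have f1 := fact_neq0 i; have f2 := fact_neq0 (k - i).
have f3 : ('C(k, i)%:R : F) != 0 by rewrite pnatr_eq0 -lt0n bin_gt0.
rewrite -h; field.
by rewrite f1 f2 f3.
Qed.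

Lemma Sp_add x y k : GRing.comm x y ->
  Sp (x + y) k = \sum_(i < k) \sum_(j < k) (if (i + j < k)%N then Gt x y i j else 0).
Proof.
move=> hc; elim: k => [|k IH]; first by rewrite /Sp !big_ord0.
rewrite /Sp big_ord_recr /= -/(Sp (x + y) k) IH.
have e1 : \sum_(i < k.+1) \sum_(j < k.+1) (if (i + j < k.+1)%N then Gt x y i j else 0) =
  \sum_(i < k.+1) \sum_(j < k.+1) (if (i + j < k)%N then Gt x y i j else 0) +
  \sum_(i < k.+1) \sum_(j < k.+1) (if (i + j == k)%N then Gt x y i j else 0).
  rewrite -big_split; apply: eq_bigr => i _; rewrite -big_split; apply: eq_bigr => j _ /=.
  rewrite ltnS; case: (ltngtP (i + j) k) => _; by rewrite ?addr0 ?add0r.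
have e2 : \sum_(i < k.+1) \sum_(j < k.+1) (if (i + j < k)%N then Gt x y i j else 0) =
  \sum_(i < k) \sum_(j < k) (if (i + j < k)%N then Gt x y i j else 0).
  rewrite big_ord_recr /= [X in _ + X]big1 ?addr0 => [|j _]; last first.
    by rewrite ltnNge leq_addr.
  apply: eq_bigr => i _; rewrite big_ord_recr /= ltnNge leq_addl addr0 //.
have e3 : \sum_(i < k.+1) \sum_(j < k.+1) (if (i + j == k)%N then Gt x y i j else 0) =
  \sum_(i < k.+1) Gt x y i (k - i).
  apply: eq_bigr => i _.
  have hi : (i <= k)%N by rewrite -ltnS.
  rewrite (bigD1 (inord (k - i))) //= inordK ?ltnS ?leq_subr // subnKC // eqxx.
  rewrite big1 ?addr0 // => j hj; case: eqP => // hk.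
  move/eqP: hj; case; apply/val_inj; rewrite /= inordK; [lia | rewrite ltnS leq_subr //].
have e4 : (k`!%:R : F)^-1 *: (x + y) ^+ k = \sum_(i < k.+1) Gt x y i (k - i).
  rewrite exprDn_comm // scaler_sumr.
  rewrite [RHS](reindex_inj rev_ord_inj) /=; apply: eq_bigr => i _.
  have hi : (i <= k)%N by rewrite -ltnS.
  by rewrite subSS subKn // /Gt -(scaler_nat 'C(k, i)) scalerA binom_coef.
by rewrite e1 e2 e3 e4.
Qed.

Lemma Sp_diff x y k : GRing.comm x y ->
  Sp x k * Sp y k - Sp (x + y) k =
  \sum_(i < k) \sum_(j < k) (if (k <= i + j)%N then Gt x y i j else 0).
Proof.
move=> hc; rewrite Sp_prod Sp_add // -sumrB; apply: eq_bigr => i _.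
rewrite -sumrB; apply: eq_bigr => j _.
by case: (ltnP (i + j) k) => _; rewrite ?subrr ?subr0.
Qed.
End SpSec.

Section Main.
Variable R : realType.
Local Notation C := R[i].
Local Notation Re := (@complex.Re R).
Local Notation Im := (@complex.Im R).

Definition nc (z : C) : R := `|Re z| + `|Im z|.

Lemma nc_ge0 z : 0 <= nc z. Proof. by rewrite addr_ge0. Qed.
Lemma ReD (x y : C) : Re (x + y) = Re x + Re y. Proof. by case: x => a b; case: y. Qed.
Lemma ImD (x y : C) : Im (x + y) = Im x + Im y. Proof. by case: x => a b; case: y. Qed.
Lemma ReB (x y : C) : Re (x - y) = Re x - Re y. Proof. by case: x => a b; case: y. Qed.
Lemma ImB (x y : C) : Im (x - y) = Im x - Im y. Proof. by case: x => a b; case: y. Qed.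
Lemma ReM (x y : C) : Re (x * y) = Re x * Re y - Im x * Im y.
Proof. by case: x => a b; case: y. Qed.
Lemma ImM (x y : C) : Im (x * y) = Re x * Im y + Im x * Re y.
Proof. by case: x => a b; case: y. Qed.
Lemma ncD x y : nc (x + y) <= nc x + nc y.
Proof.
rewrite /nc ReD ImD; have := ler_normD (Re x) (Re y); have := ler_normD (Im x) (Im y).
lra.
Qed.
Lemma ncN x : nc (- x) = nc x.
Proof. by case: x => a b; rewrite /nc /= !normrN. Qed.
Lemma ncM x y : nc (x * y) <= nc x * nc y.
Proof.
rewrite /nc ReM ImM.
have h1 := ler_normB (Re x * Re y) (Im x * Im y).
have h2 := ler_normD (Re x * Im y) (Im x * Re y).
rewrite !normrM in h1 h2.
have := normr_ge0 (Re x); have := normr_ge0 (Im x); have := normr_ge0 (Re y); have := normr_ge0 (Im y).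
nra.
Qed.
Lemma nc0 : nc 0 = 0. Proof. by rewrite /nc /= normr0 addr0. Qed.
Lemma nc_real (r : R) : nc (r%:C) = `|r|. Proof. by rewrite /nc /= normr0 addr0. Qed.
Lemma Re_le z : `|Re z| <= nc z. Proof. by rewrite /nc lerDl. Qed.
Lemma Im_le z : `|Im z| <= nc z. Proof. by rewrite /nc lerDr. Qed.
Lemma Re_sum (I : Type) (r : seq I) (P : pred I) (F : I -> C) :
  Re (\sum_(i <- r | P i) F i) = \sum_(i <- r | P i) Re (F i).
Proof. exact: (big_morph _ ReD (erefl _)). Qed.
Lemma Im_sum (I : Type) (r : seq I) (P : pred I) (F : I -> C) :
  Im (\sum_(i <- r | P i) F i) = \sum_(i <- r | P i) Im (F i).
Proof. exact: (big_morph _ ImD (erefl _)). Qed.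

Definition mn {m n} (A : 'M[C]_(m, n)) : R := \sum_i \sum_j nc (A i j).

Lemma mn_ge0 m n (A : 'M[C]_(m, n)) : 0 <= mn A.
Proof. by apply: sumr_ge0 => i _; apply: sumr_ge0 => j _; exact: nc_ge0. Qed.

Lemma le_sum1 (I : finType) (F : I -> R) i : (forall j, 0 <= F j) -> F i <= \sum_j F j.
Proof. by move=> h; rewrite (bigD1 i) //= lerDl sumr_ge0. Qed.

Lemma mn_entry m n (A : 'M[C]_(m, n)) i j : nc (A i j) <= mn A.
Proof.
apply: le_trans (@le_sum1 _ (fun i => \sum_j nc (A i j)) i
  (fun i => sumr_ge0 _ (fun j _ => nc_ge0 (A i j)))).
exact: (@le_sum1 _ (fun j => nc (A i j)) j (fun j => nc_ge0 (A i j))).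
Qed.

Lemma mnD m n (A B : 'M[C]_(m, n)) : mn (A + B) <= mn A + mn B.
Proof.
rewrite /mn -big_split ler_sum // => i _; rewrite -big_split ler_sum // => j _.
by rewrite mxE ncD.
Qed.
Lemma mnN m n (A : 'M[C]_(m, n)) : mn (- A) = mn A.
Proof. by apply: eq_bigr => i _; apply: eq_bigr => j _; rewrite mxE ncN. Qed.
Lemma mn0 m n : mn (0 : 'M[C]_(m, n)) = 0.
Proof. by rewrite /mn big1 // => i _; rewrite big1 // => j _; rewrite mxE nc0. Qed.
Lemma mn_sum m n (I : Type) (r : seq I) (P : pred I) (F : I -> 'M[C]_(m, n)) :
  mn (\sum_(l <- r | P l) F l) <= \sum_(l <- r | P l) mn (F l).
Proof.
apply: (big_ind2 (fun X y => mn X <= y)) => //; first by rewrite mn0.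
by move=> X1 y1 X2 y2 h1 h2; exact: le_trans (mnD _ _) (lerD h1 h2).
Qed.
Lemma mnZ m n c (A : 'M[C]_(m, n)) : mn (c *: A) <= nc c * mn A.
Proof.
rewrite /mn mulr_sumr ler_sum // => i _; rewrite mulr_sumr ler_sum // => j _.
by rewrite mxE ncM.
Qed.
Lemma nc_sum (I : Type) (r : seq I) (P : pred I) (F : I -> C) :
  nc (\sum_(l <- r | P l) F l) <= \sum_(l <- r | P l) nc (F l).
Proof.
apply: (big_ind2 (fun X y => nc X <= y)) => //; first by rewrite nc0.
by move=> X1 y1 X2 y2 h1 h2; exact: le_trans (ncD _ _) (lerD h1 h2).
Qed.
Lemma mnM m n p (A : 'M[C]_(m, n)) (B : 'M[C]_(n, p)) : mn (A *m B) <= mn A * mn B.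
Proof.
rewrite /mn mulr_suml ler_sum // => i _.
apply: (@le_trans _ _ (\sum_j \sum_k nc (A i k) * nc (B k j))).
  apply: ler_sum => j _; rewrite mxE; apply: le_trans (nc_sum _ _ _) _.
  by apply: ler_sum => k _; exact: ncM.
rewrite exchange_big /= mulr_suml ler_sum // => k _.
rewrite -mulr_sumr ler_wpM2l ?nc_ge0 //.
exact: (@le_sum1 _ (fun k => \sum_j nc (B k j)) k (fun k => sumr_ge0 _ (fun j _ => nc_ge0 (B k j)))).
Qed.

Lemma mpowS n (A : 'M[C]_n) l : mpow A l.+1 = A *m mpow A l.
Proof. by []. Qed.

Lemma mn_mpow n (A : 'M[C]_n) l : mn (mpow A l) <= mn (1%:M : 'M[C]_n) * mn A ^+ l.
Proof.
elim: l => [|l IH]; first by rewrite expr0 mulr1.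
rewrite mpowS exprS mulrCA; apply: le_trans (mnM _ _) _.
by rewrite ler_wpM2l ?mn_ge0.
Qed.

Lemma sq0 (u v : nat -> R) : (forall k, 0 <= u k <= v k) ->
  v @ \oo --> 0 -> u @ \oo --> 0.
Proof.
move=> h hv; apply: (@squeeze_cvgr _ _ _ _ (fun=> 0) v u).
- by apply: nearW.
- exact: cvg_cst.
- exact: hv.
Qed.

Lemma sq_to (u v : nat -> R) l : (forall k, `|u k - l| <= v k) ->
  v @ \oo --> 0 -> u @ \oo --> l.
Proof.
move=> h hv; apply: (@squeeze_cvgr _ _ _ _ (fun k => l - v k) (fun k => l + v k) u).
- apply: nearW => k; have := h k; rewrite ler_distl => /andP[h1 h2].
  by apply/andP; split; lra.
- rewrite -[X in _ --> X]subr0; apply: cvgB => //; exact: cvg_cst.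
- rewrite -[X in _ --> X]addr0; apply: cvgD => //; exact: cvg_cst.
Qed.

Definition mcvg m n (S : nat -> 'M[C]_(m, n)) (L : 'M[C]_(m, n)) :=
  (fun k => mn (S k - L)) @ \oo --> (0 : R).

Lemma mcvg_Re m n (S : nat -> 'M[C]_(m, n)) L i j : mcvg S L ->
  (fun k => Re (S k i j)) @ \oo --> Re (L i j).
Proof.
move=> h; apply: (sq_to _ h) => k.
have := mn_entry (S k - L) i j; rewrite !mxE -ReB; have := Re_le (S k i j - L i j).
lra.
Qed.
Lemma mcvg_Im m n (S : nat -> 'M[C]_(m, n)) L i j : mcvg S L ->
  (fun k => Im (S k i j)) @ \oo --> Im (L i j).
Proof.
move=> h; apply: (sq_to _ h) => k.
have := mn_entry (S k - L) i j; rewrite !mxE -ImB; have := Im_le (S k i j - L i j).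
lra.
Qed.

Lemma mexp_eq n (A : 'M[C]_n) L : mcvg (mexp_partial A) L -> mexp A = L.
Proof.
move=> h; apply/matrixP => i j; rewrite mxE.
rewrite (cvg_lim (@Rhausdorff R) (mcvg_Re (i:=i) (j:=j) h)).
rewrite (cvg_lim (@Rhausdorff R) (mcvg_Im (i:=i) (j:=j) h)).
by case: (L i j).
Qed.

Lemma mcvg_trans m n (S S' : nat -> 'M[C]_(m, n)) L : mcvg S L ->
  (fun k => mn (S' k - S k)) @ \oo --> (0 : R) -> mcvg S' L.
Proof.
move=> h1 h2; apply: (sq0 (v := fun k => mn (S' k - S k) + mn (S k - L))).
  move=> k; rewrite mn_ge0 /=.
  have -> : S' k - L = (S' k - S k) + (S k - L) by rewrite addrA subrK.
  exact: mnD.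
by rewrite -[X in _ --> X](addr0 (0:R)); apply: cvgD.
Qed.

Lemma mcvg_mul m n p (S : nat -> 'M[C]_(m, n)) (S' : nat -> 'M[C]_(n, p)) L L' :
  mcvg S L -> mcvg S' L' -> mcvg (fun k => S k *m S' k) (L *m L').
Proof.
move=> h1 h2.
apply: (sq0 (v := fun k => mn (S k - L) * (mn (S' k - L') + mn L') + mn L * mn (S' k - L'))).
  move=> k; rewrite mn_ge0 /=.
  have -> : S k *m S' k - L *m L' = (S k - L) *m S' k + L *m (S' k - L').
    by rewrite mulmxBl mulmxBr addrA subrK.
  apply: le_trans (mnD _ _) _; apply: lerD; last exact: mnM.
  apply: le_trans (mnM _ _) _; apply: ler_wpM2l; first exact: mn_ge0.
  by rewrite -[X in mn X](subrK L') mnD.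
have -> : (0 : R) = 0 * (0 + mn L') + mn L * 0 by rewrite !mul0r mulr0 addr0.
apply: cvgD; last by apply: cvgM => //; exact: cvg_cst.
apply: cvgM => //; apply: cvgD => //; exact: cvg_cst.
Qed.

Lemma cvg_abs0 (u : nat -> R) l : u @ \oo --> l -> (fun k => `|u k - l|) @ \oo --> (0:R).
Proof.
move=> h; apply/norm_cvg0P.
rewrite -[X in _ --> X](subrr l); apply: cvgB => //; exact: cvg_cst.
Qed.

Lemma cvg_sum0 (I : finType) (F : I -> nat -> R) : (forall i, F i @ \oo --> (0:R)) ->
  (fun k => \sum_i F i k) @ \oo --> (0:R).
Proof.
move=> h.
have := @cvg_big R I +%R 0 xpredT add_continuous nat \oo (index_enum I) F (fun=> 0) _ (fun i _ => h i).
move=> H; have := H _; rewrite big1 // => H2; apply: H2; exact: _.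
Qed.

Lemma nc_invfact l : nc ((l`!%:R : C)^-1) = (l`!%:R : R)^-1.
Proof.
rewrite -(rmorph_nat (real_complex R)) -fmorphV nc_real ger0_norm // invr_ge0 ler0n //.
Qed.

Lemma mcvg_exp n (A : 'M[C]_n) : mcvg (mexp_partial A) (mexp A).
Proof.
set K := mn (1%:M : 'M[C]_n); set a := mn A.
have Hb : forall l, mn ((l`!%:R : C)^-1 *: mpow A l) <= K * exp_coeff a l.
  move=> l; apply: le_trans (mnZ _ _) _; rewrite nc_invfact /exp_coeff /=.
  have := mn_mpow A l; rewrite -/K -/a => h.
  have hf : 0 <= (l`!%:R : R)^-1 by rewrite invr_ge0 ler0n.
  apply: le_trans (ler_wpM2l hf h) _; rewrite le_eqVlt; apply/orP; left; apply/eqP.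
  by rewrite mulrC -mulrA.
have hcv : cvgn (series (fun l => K * exp_coeff a l)).
  have -> : (fun l => K * exp_coeff a l) = K *: exp_coeff a by apply/funext.
  by apply: is_cvg_seriesZ; exact: is_cvg_series_exp_coeff.
have hge : forall l, 0 <= K * exp_coeff a l.
  by move=> l; rewrite mulr_ge0 ?mn_ge0 ?exp_coeff_ge0 ?mn_ge0.
have cRe : forall i j, cvgn (fun k => Re (mexp_partial A k i j)).
  move=> i j; set u := fun l => Re (((l`!%:R : C)^-1 *: mpow A l) i j).
  have -> : (fun k => Re (mexp_partial A k i j)) = series u.
    by apply/funext => k; rewrite /series /= big_mkord /mexp_partial summxE Re_sum.
  apply: normed_cvg.
  apply: (@series_le_cvg _ (fun l => `|u l|) _ _ hge _ hcv) => // l.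
  apply: le_trans (Hb l); apply: le_trans (Re_le _) _; exact: mn_entry.
have cIm : forall i j, cvgn (fun k => Im (mexp_partial A k i j)).
  move=> i j; set u := fun l => Im (((l`!%:R : C)^-1 *: mpow A l) i j).
  have -> : (fun k => Im (mexp_partial A k i j)) = series u.
    by apply/funext => k; rewrite /series /= big_mkord /mexp_partial summxE Im_sum.
  apply: normed_cvg.
  apply: (@series_le_cvg _ (fun l => `|u l|) _ _ hge _ hcv) => // l.
  apply: le_trans (Hb l); apply: le_trans (Im_le _) _; exact: mn_entry.
rewrite /mcvg /mn; apply: cvg_sum0 => i; apply: cvg_sum0 => j.
have -> : (fun k => nc ((mexp_partial A k - mexp A) i j)) =
  (fun k => `|Re (mexp_partial A k i j) - lim (Re (mexp_partial A k i j) @[k --> \oo])|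
          + `|Im (mexp_partial A k i j) - lim (Im (mexp_partial A k i j) @[k --> \oo])|).
  by apply/funext => k; rewrite /nc !mxE ReB ImB.
rewrite -[X in _ --> X](addr0 (0:R)); apply: cvgD; apply: cvg_abs0.
  exact: cRe.
exact: cIm.
Qed.

Lemma mpowE n (A : 'M[C]_n.+1) l : mpow A l = A ^+ l.
Proof.
elim: l => [|l IH]; first by rewrite expr0.
by rewrite mpowS IH exprS mulmxE.
Qed.

Lemma mexp_partialE n (A : 'M[C]_n.+1) k : mexp_partial A k = Sp A k.
Proof. by apply: eq_bigr => l _; rewrite mpowE. Qed.

Lemma SpR (a : R) k : Sp (a : R^o) k = series (exp_coeff a) k.
Proof.
rewrite /Sp /series /= big_mkord; apply: eq_bigr => l _.
by rewrite /exp_coeff /= mulrC.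
Qed.

Lemma mexp_add n (H : 'M[C]_n.+1) (a b : C) :
  mexp (a *: H) *m mexp (b *: H) = mexp ((a + b) *: H).
Proof.
symmetry; apply: mexp_eq.
apply: (mcvg_trans (S := fun k => mexp_partial (a *: H) k *m mexp_partial (b *: H) k)).
  exact: mcvg_mul (mcvg_exp _) (mcvg_exp _).
set x := a *: H; set y := b *: H.
have hc : GRing.comm x y.
  by rewrite /GRing.comm /x /y -!scalerAl -!scalerAr !scalerA mulrC.
have -> : (a + b) *: H = x + y by rewrite scalerDl.
set K := mn (1%:M : 'M[C]_n.+1); set al := mn x; set be := mn y.
have hK : 0 <= K by exact: mn_ge0.
apply: (sq0 (v := fun k => K * K * (Sp (al : R^o) k * Sp (be : R^o) k - Sp (al + be : R^o) k))).
  move=> k; rewrite mn_ge0 /= !mexp_partialE mulmxE -mnN opprB Sp_diff //.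
  rewrite (Sp_diff (A := R^o)) //; last exact: mulrC.
  rewrite mulr_sumr; apply: le_trans (mn_sum _ _ _) _; apply: ler_sum => i _.
  rewrite mulr_sumr; apply: le_trans (mn_sum _ _ _) _; apply: ler_sum => j _.
  case: ifP => _; last by rewrite mn0 mulr0.
  rewrite /Gt; apply: le_trans (mnZ _ _) _.
  have h1 : nc ((i`!%:R : C)^-1 * (j`!%:R)^-1) <= (i`!%:R : R)^-1 * (j`!%:R)^-1.
    by apply: le_trans (ncM _ _) _; rewrite !nc_invfact.
  have h2 : mn (x ^+ i * y ^+ j) <= (K * al ^+ i) * (K * be ^+ j).
    rewrite -mulmxE; apply: le_trans (mnM _ _) _.
    rewrite -!mpowE; apply: ler_pM; rewrite ?mn_ge0 //; exact: mn_mpow.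
  apply: le_trans (ler_pM (nc_ge0 _) (mn_ge0 _) h1 h2) _.
  rewrite le_eqVlt; apply/orP; left; apply/eqP.
  rewrite /GRing.scale /=. ring.
have -> : (0:R) = K * K * (expR al * expR be - expR (al + be)) by rewrite expRD subrr mulr0.
apply: cvgM => //; first exact: cvg_cst.
have e : forall z : R, (fun k => Sp (z : R^o) k) @ \oo --> expR z.
  move=> z; have -> : (fun k => Sp (z : R^o) k) = series (exp_coeff z).
    by apply/funext => k; rewrite SpR.
  exact: is_cvg_series_exp_coeff.
apply: cvgB => //; apply: cvgM => //; exact: e.
Qed.

Lemma mexp0 n : mexp (0 : 'M[C]_n) = 1%:M.
Proof.
apply: mexp_eq; rewrite /mcvg -(cvg_shiftS).
have -> : (fun k => mn (mexp_partial (0 : 'M[C]_n) k.+1 - 1%:M)) = fun=> 0.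
  apply/funext => k; rewrite /mexp_partial big_ord_recl /= big1 ?addr0.
    by rewrite fact0 invr1 scale1r subrr mn0.
  by move=> l _; rewrite mul0mx scaler0.
apply: cvg_cst.
Qed.
End Main.

Section Comb.
Variable R : realType.
Local Notation C := R[i].
Variables d N : nat.
Local Notation T := (Idx d N).
Local Notation opH := ('M[C]_#|{: Idx d N}|).

Definition mE (M : opH) (a b : T) : C := M (enum_rank a) (enum_rank b).

Lemma mE_ext (M1 M2 : opH) : (forall a b, mE M1 a b = mE M2 a b) -> M1 = M2.
Proof.
move=> h; apply/matrixP => i j; rewrite -(enum_valK i) -(enum_valK j); exact: h.
Qed.

Lemma sum_rank (F : 'I_#|{: T}| -> C) : \sum_i F i = \sum_(a : T) F (enum_rank a).
Proof. by rewrite (reindex (@enum_rank T)) //; apply: onW_bij; exact: enum_rank_bij. Qed.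

Lemma mE_mul (A B : opH) a b : mE (A *m B) a b = \sum_c mE A a c * mE B c b.
Proof. by rewrite /mE mxE sum_rank. Qed.

Lemma mE_tensor (O : 'I_N -> 'M[C]_d) a b : mE (tensor_op O) a b = \prod_t O t (a t) (b t).
Proof. by rewrite /mE mxE !enum_rankK. Qed.

Lemma mE_1 a b : mE (1%:M : opH) a b = (a == b)%:R.
Proof. by rewrite /mE mxE (inj_eq enum_rank_inj). Qed.

Lemma mE_cshift a b : mE (cshift R d N) a b = (a == shift_idx b)%:R.
Proof. by rewrite /mE mxE !enum_rankK. Qed.

Lemma mxtrace_mE (M : opH) : \tr M = \sum_a mE M a a.
Proof. by rewrite /mxtrace sum_rank. Qed.

Lemma prod_bool (I : finType) (Q P : pred I) :
  \prod_(t | Q t) ((P t)%:R : C) = ([forall t, Q t ==> P t])%:R.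
Proof.
case: (boolP [forall t, Q t ==> P t]) => h.
  by rewrite big1 // => t qt; move/forallP: h => /(_ t); rewrite qt /= => ->.
move/forallPn: h => [t]; rewrite negb_imply => /andP[qt pt].
by rewrite (bigD1 t) //= (negbTE pt) mul0r.
Qed.

Lemma tensor_ext (X Y : 'I_N -> 'M[C]_d) : (forall t, X t = Y t) -> tensor_op X = tensor_op Y.
Proof. by move=> h; congr tensor_op; apply/funext. Qed.

Lemma tensor_mul (X Y : 'I_N -> 'M[C]_d) :
  tensor_op X *m tensor_op Y = tensor_op (fun t => X t *m Y t).
Proof.
apply: mE_ext => a b; rewrite mE_mul mE_tensor.
rewrite (eq_bigr (fun c : T => \prod_t (X t (a t) (c t) * Y t (c t) (b t)))); last first.
  by move=> c _; rewrite !mE_tensor -big_split.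
rewrite -(bigA_distr_bigA (fun t j => X t (a t) j * Y t j (b t))).
by apply: eq_bigr => t _; rewrite mxE.
Qed.

Lemma tensor1 : tensor_op (fun _ : 'I_N => 1%:M : 'M[C]_d) = 1%:M.
Proof.
apply: mE_ext => a b; rewrite mE_tensor mE_1.
under eq_bigr do rewrite mxE.
rewrite (prod_bool xpredT (fun t => a t == b t)); congr ((nat_of_bool _)%:R).
apply/idP/eqP => [/forallP h|->]; last by apply/forallP => t; rewrite eqxx.
apply/ffunP => t; exact/eqP/h.
Qed.

Lemma slice_tensor (t : 'I_N) (A : 'M[C]_d) :
  slice_op t A = tensor_op (fun s => if s == t then A else 1%:M).
Proof.
apply: mE_ext => a b; rewrite mE_tensor /mE mxE !enum_rankK.
rewrite (bigD1 t) //= eqxx; congr (_ * _).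
under eq_bigr => s hs do rewrite (negbTE hs) mxE.
by rewrite prod_bool.
Qed.

Lemma slice_mul (t : 'I_N) (A B : 'M[C]_d) : slice_op t A *m slice_op t B = slice_op t (A *m B).
Proof.
rewrite !slice_tensor tensor_mul; apply: tensor_ext => s.
by case: (s == t); rewrite ?mulmx1.
Qed.

Lemma slice1 (t : 'I_N) : slice_op t (1%:M : 'M[C]_d) = 1%:M.
Proof. by rewrite slice_tensor -tensor1; apply: tensor_ext => s; case: (s == t). Qed.

Lemma sliceD (t : 'I_N) (A B : 'M[C]_d) : slice_op t (A + B) = slice_op t A + slice_op t B.
Proof. by apply/matrixP => i j; rewrite !mxE mulrDl. Qed.

Lemma slice0 (t : 'I_N) : slice_op t (0 : 'M[C]_d) = 0.
Proof. by apply/matrixP => i j; rewrite !mxE mul0r. Qed.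

Lemma sliceZ (t : 'I_N) c (A : 'M[C]_d) : c *: slice_op t A = slice_op t (c *: A).
Proof. by apply/matrixP => i j; rewrite !mxE mulrA. Qed.

Lemma slice_mpow (t : 'I_N) (A : 'M[C]_d) l : mpow (slice_op t A) l = slice_op t (mpow A l).
Proof.
elim: l => [|l IH]; first by rewrite /= slice1.
by rewrite mpowS IH slice_mul.
Qed.

Lemma slice_partial (t : 'I_N) (A : 'M[C]_d) k :
  mexp_partial (slice_op t A) k = slice_op t (mexp_partial A k).
Proof.
rewrite /mexp_partial (big_morph _ (sliceD t) (slice0 t)).
by apply: eq_bigr => l _; rewrite slice_mpow sliceZ.
Qed.

Lemma mexp_slice (t : 'I_N) (A : 'M[C]_d) : mexp (slice_op t A) = slice_op t (mexp A).
Proof.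
apply/matrixP => i j; rewrite !mxE.
set b := [forall s, _].
have e : forall k, mexp_partial (slice_op t A) k i j =
    mexp_partial A k ((enum_val i : T) t) ((enum_val j : T) t) * b%:R.
  by move=> k; rewrite slice_partial mxE.
have -> : (fun k => complex.Re (mexp_partial (slice_op t A) k i j)) =
   (fun k => complex.Re (mexp_partial A k ((enum_val i : T) t) ((enum_val j : T) t) * b%:R)).
  by apply/funext => k; rewrite e.
have -> : (fun k => complex.Im (mexp_partial (slice_op t A) k i j)) =
   (fun k => complex.Im (mexp_partial A k ((enum_val i : T) t) ((enum_val j : T) t) * b%:R)).
  by apply/funext => k; rewrite e.
clear e; clearbody b; case: b.
  rewrite [RHS]mulr1; congr (Complex (limn _) (limn _)); apply/funext => k; by rewrite mulr1.
rewrite [LHS](_ : _ = Complex (limn (fun=> 0)) (limn (fun=> 0))); last first.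
  by congr (Complex (limn _) (limn _)); apply/funext => k; rewrite mulr0.
by rewrite mulr0 !lim_cst.
Qed.

End Comb.

Section Cyc.
Variable R : realType.
Local Notation C := R[i].
Variable d : nat.
Local Notation I := ('I_d).

Definition pth n (x : I) (g : {ffun 'I_n -> I}) (k : nat) : I :=
  match k with 0 => x | k'.+1 => odflt x (omap g (insub k')) end.
Definition fcons n (x : I) (g : {ffun 'I_n -> I}) : {ffun 'I_n.+1 -> I} :=
  [ffun j : 'I_n.+1 => pth x g j].
Definition ftail n (f : {ffun 'I_n.+1 -> I}) : {ffun 'I_n -> I} :=
  [ffun j => f (lift ord0 j)].

Lemma pth_lt n x (g : {ffun 'I_n -> I}) k (hk : (k < n)%N) : pth x g k.+1 = g (Ordinal hk).
Proof. by rewrite /= insubT. Qed.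

Lemma fcons0 n x (g : {ffun 'I_n -> I}) : fcons x g ord0 = x.
Proof. by rewrite ffunE. Qed.

Lemma ftail_fcons n x (g : {ffun 'I_n -> I}) : ftail (fcons x g) = g.
Proof.
apply/ffunP => j; rewrite !ffunE /= add0n insubT /=.
  by []. by move=> h; congr (g _); apply: val_inj.
Qed.

Lemma fconsK n (f : {ffun 'I_n.+1 -> I}) : fcons (f ord0) (ftail f) = f.
Proof.
apply/ffunP => j; rewrite ffunE; case: j => [[|k] hk] /=.
  by congr (f _); apply: val_inj.
have hk' : (k < n)%N := hk.
rewrite insubT /= ffunE; congr (f _); exact: val_inj.
Qed.

Lemma sum_fcons n (F : {ffun 'I_n.+1 -> I} -> C) :
  \sum_f F f = \sum_x \sum_(g : {ffun 'I_n -> I}) F (fcons x g).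
Proof.
rewrite pair_bigA /=.
have hb : bijective (fun p : I * {ffun 'I_n -> I} => fcons p.1 p.2).
  exists (fun f : {ffun 'I_n.+1 -> I} => (f ord0, ftail f)) => [[x g]|f] /=.
    by rewrite fcons0 ftail_fcons.
  exact: fconsK.
by rewrite (reindex _ (onW_bij _ hb)).
Qed.

Fixpoint Pm n (M : nat -> 'M[C]_d) : 'M[C]_d :=
  match n with 0 => 1%:M | n'.+1 => Pm n' (fun k => M k.+1) *m M 0 end.

Lemma PmS n (M : nat -> 'M[C]_d) : Pm n.+1 M = M n *m Pm n M.
Proof.
elim: n M => [|n IH] M; first by rewrite /= mulmx1 mul1mx.
have -> : Pm n.+2 M = Pm n.+1 (fun k => M k.+1) *m M 0 by [].
by rewrite IH -mulmxA.
Qed.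

Lemma Pm_ext n (M M' : nat -> 'M[C]_d) : (forall k, (k < n)%N -> M k = M' k) ->
  Pm n M = Pm n M'.
Proof.
elim: n M M' => [//|n IH] M M' h /=.
rewrite (h 0%N) // (IH _ (fun k => M' k.+1)) // => k hk; exact: h.
Qed.

Lemma pth_fcons n x z (g : {ffun 'I_n -> I}) k : (k <= n)%N ->
  pth x (fcons z g) k.+1 = pth z g k.
Proof.
move=> hk; have hk' : (k < n.+1)%N by [].
by rewrite (pth_lt _ _ hk') ffunE.
Qed.

Lemma chain n (M : nat -> 'M[C]_d) (x y : I) :
  \sum_(g : {ffun 'I_n -> I}) (pth x g n == y)%:R *
     \prod_(t < n) M t (pth x g t.+1) (pth x g t) = Pm n M y x.
Proof.
elim: n M x y => [|n IH] M x y.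
  under eq_bigr do rewrite big_ord0 mulr1.
  rewrite (eq_bigr (fun _ => (x == y)%:R)) // sumr_const card_ffun !card_ord expn0.
  have -> : Pm 0 M = 1%:M by []. by rewrite mxE eq_sym.
have -> : Pm n.+1 M = Pm n (fun k => M k.+1) *m M 0 by [].
rewrite sum_fcons mxE; apply: eq_bigr => z _.
rewrite -(IH (fun k => M k.+1) z y) mulr_suml.
apply: eq_bigr => g _.
rewrite pth_fcons // big_ord_recl.
rewrite -mulrA; congr (_ * _); rewrite mulrC; congr (_ * _).
  apply: eq_bigr => t _; rewrite lift0 !pth_fcons // ltnW //.
by rewrite pth_fcons.
Qed.

Lemma ord_pred0 n : ord_pred (ord0 : 'I_n.+1) = ord_max.
Proof. by apply: val_inj => /=; rewrite modn_small. Qed.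
Lemma ord_pred_lift n (t : 'I_n) : (ord_pred (lift ord0 t : 'I_n.+1) : nat) = t.
Proof.
rewrite /= add0n modnDr modn_small //.
by apply: ltn_trans (ltn_ord t) _.
Qed.

Lemma cyc n (M : nat -> 'M[C]_d) :
  \sum_(c : {ffun 'I_n.+1 -> I}) \prod_(t < n.+1) M t (c t) (c (ord_pred t)) =
  \tr (M 0%N *m Pm n (fun k => M k.+1)).
Proof.
rewrite sum_fcons /mxtrace; apply: eq_bigr => x _; rewrite mxE.
under [RHS]eq_bigr => y _ do rewrite -chain mulr_sumr.
rewrite exchange_big; apply: eq_bigr => g _.
rewrite [RHS](bigD1 (pth x g n)) // eqxx mul1r.
rewrite [X in _ = _ + X]big1 ?addr0; last by move=> y hy; rewrite eq_sym (negbTE hy) mul0r mulr0.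
rewrite big_ord_recl; congr (_ * _).
  by rewrite !ffunE ord_pred0.
by apply: eq_bigr => t _; rewrite !ffunE ord_pred_lift lift0.
Qed.

End Cyc.

Section Tr.
Variable R : realType.
Local Notation C := R[i].
Variables d N : nat.
Local Notation T := (Idx d N).
Local Notation opH := ('M[C]_#|{: Idx d N}|).

Lemma tr_tcs (X Y : 'I_N -> 'M[C]_d) :
  \tr (tensor_op X *m cshift R d N *m tensor_op Y) =
  \sum_(c : T) \prod_t (Y t *m X t) (c t) (c (ord_pred t)).
Proof.
rewrite mxtrace_mE; under eq_bigr => a _ do rewrite mE_mul.
rewrite exchange_big; apply: eq_bigr => c _.
have e : forall a, mE (tensor_op X *m cshift R d N) a c = mE (tensor_op X) a (shift_idx c).
  move=> a; rewrite mE_mul (bigD1 (shift_idx c)) //= mE_cshift eqxx mulr1.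
  rewrite big1 ?addr0 // => b hb; by rewrite mE_cshift (negbTE hb) mulr0.
under eq_bigr => a _ do rewrite e !mE_tensor -big_split.
rewrite -(bigA_distr_bigA (fun t j => X t j (shift_idx c t) * Y t (c t) j)).
apply: eq_bigr => t _; rewrite mxE; apply: eq_bigr => j _.
by rewrite ffunE mulrC.
Qed.

Lemma choiE (M : opH) p : choi M p = M (enum_rank p.1) (enum_rank p.2).
Proof.
rewrite /choi (eq_bigr (fun q => if q == (p.2, p.2) then M (enum_rank p.1) (enum_rank p.2) else 0)); last first.
  move=> [q1 q2] _; rewrite /phi_plus /= xpair_eqE.
  case: (eqVneq q2 p.2) => [->|h2]; case: (eqVneq q1 p.2) => [->|h1] /=.
  - by rewrite !mulr1.
  - by rewrite mulr0.
  - by rewrite mulr0 mul0r.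
  - by rewrite mulr0 mul0r.
rewrite (bigD1 (p.2, p.2)) //= eqxx big1 ?addr0 // => q /negbTE -> //.
Qed.

Lemma inner_tr (A B : opH) : inner (choi (adjoint A)) (choi B) = \tr (A *m B).
Proof.
rewrite /inner; under eq_bigr => p _ do rewrite !choiE /adjoint !mxE conjcK.
rewrite -(pair_bigA _ (fun a b : T => A (enum_rank b) (enum_rank a) * B (enum_rank a) (enum_rank b))) /= mxtrace_mulC mxtrace_mE; apply: eq_bigr => a _.
rewrite mE_mul; apply: eq_bigr => b _; by rewrite /mE mulrC.
Qed.

Lemma big_ifone (r : seq 'I_N) s (U : 'M[C]_d) : uniq r ->
  \big[mulmx/1%:M]_(t <- r) (if s == t then U else 1%:M) = if s \in r then U else 1%:M.
Proof.
elim: r => [|x r IH] /=; first by rewrite big_nil.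
move=> /andP[xr ur]; rewrite big_cons IH // in_cons.
case: (eqVneq s x) => [->|ne] /=; first by rewrite (negbTE xr) mulmx1.
by rewrite mul1mx.
Qed.

Lemma big_tensor (r : seq 'I_N) (F : 'I_N -> 'I_N -> 'M[C]_d) :
  \big[mulmx/1%:M]_(t <- r) tensor_op (F t) =
  tensor_op (fun s => \big[mulmx/1%:M]_(t <- r) F t s).
Proof.
elim: r => [|x r IH].
  rewrite big_nil -tensor1; apply: tensor_ext => s; by rewrite big_nil.
rewrite big_cons IH tensor_mul; apply: tensor_ext => s; by rewrite big_cons.
Qed.

Lemma big_slices (U : 'M[C]_d) :
  \big[mulmx/1%:M]_(t < N) slice_op t U = tensor_op (fun _ => U).
Proof.
under eq_bigr do rewrite slice_tensor.
rewrite big_tensor; apply: tensor_ext => s.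
by rewrite big_ifone ?index_enum_uniq // mem_index_enum.
Qed.
End Tr.

Section KL0.
Variable R : realType.
Local Notation C := R[i].
Variables (d : nat) (H : 'M[C]_d.+1).
Definition Ex (s : R) := mexp ((iC R * s%:C) *: H).

Lemma EE a b : Ex a *m Ex b = Ex (a + b).
Proof. by rewrite /Ex mexp_add -mulrDr -rmorphD. Qed.

Lemma E0 : Ex 0 = 1%:M.
Proof. by rewrite /Ex (_ : (0:R)%:C = 0) // mulr0 scale0r mexp0. Qed.

Lemma UE s : mexp ((- iC R * s%:C) *: H) = Ex (- s).
Proof. by rewrite /Ex rmorphN mulrN mulNr. Qed.

Lemma heisE s O : heis H s O = Ex s *m O *m Ex (- s).
Proof. by rewrite /heis UE. Qed.
End KL0.

Section KL.
Variable R : realType.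
Local Notation C := R[i].
Variables (d : nat) (F : R -> 'M[C]_d) (eps : R) (On : nat -> 'M[C]_d).
Hypothesis FF : forall a b, F a *m F b = F (a + b).
Hypothesis F0 : F 0 = 1%:M.

Definition G k := F (eps * k%:R) *m On k *m F (- (eps * k%:R)).

Lemma KL m : Pm m (fun k => F (- eps) *m On k.+1) *m (F (- eps) *m On 0) =
  F (- (eps * m.+1%:R)) *m Pm m.+1 G.
Proof.
elim: m => [|m IH].
  rewrite (_ : Pm 0 _ = 1%:M) // mul1mx PmS (_ : Pm 0 _ = 1%:M) // mulmx1.
  rewrite /G mulr0 oppr0 F0 mul1mx mulmx1.
  by rewrite mulr1.
rewrite PmS -mulmxA IH [in RHS]PmS /G !mulmxA FF.
have -> : - (eps * m.+2%:R) + eps * m.+1%:R = - eps.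
  by rewrite -[m.+2]addn1 natrD; ring.
by [].
Qed.

Lemma Pm_big m (M : nat -> 'M[C]_d) : Pm m M = \big[mulmx/1%:M]_(t < m) M (m - t.+1)%N.
Proof.
elim: m => [|m IH]; first by rewrite big_ord0.
by rewrite PmS big_ord_recl /= subn1 IH; congr (_ *m _); apply: eq_bigr => t _; rewrite lift0 subSS.
Qed.
End KL.

Lemma tensor_mulA (R : realType) (d N : nat) (X Y : 'I_N -> 'M[R[i]]_d) (M : 'M[R[i]]_#|{: Idx d N}|) :
  tensor_op X *m (tensor_op Y *m M) = tensor_op (fun t => X t *m Y t) *m M.
Proof. by rewrite mulmxA tensor_mul. Qed.

Lemma tr_tcs' (R : realType) (d N : nat) (X Y : 'I_N -> 'M[R[i]]_d) :
  \tr (tensor_op X *m (cshift R d N *m tensor_op Y)) =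
  \sum_(c : Idx d N) \prod_t (Y t *m X t) (c t) (c (ord_pred t)).
Proof. by rewrite mulmxA tr_tcs. Qed.

Lemma trace4 (R : realType) (n : nat) (A B C D P : 'M[R[i]]_n) :
  \tr ((A *m (B *m C *m D)) *m P) = \tr (C *m (D *m (P *m (A *m B)))).
Proof. by rewrite -!mulmxA (mulmxA A B) mxtrace_mulC -!mulmxA. Qed.

Lemma cycI (R : realType) (d n : nat) (M : nat -> 'M[R[i]]_d) :
  \sum_(c : Idx d n.+1) \prod_(t < n.+1) M t (c t) (c (ord_pred t)) =
  \tr (M 0%N *m Pm n (fun k => M k.+1)).
Proof. exact: cyc. Qed.


End Helpers.
Import Helpers.

Theorem corollary3 (R : realType) (d N : nat) (hd : (0 < d)%N) (hN : (0 < N)%N)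
  (eps : R) (heps : 0 < eps) (H : 'M[R[i]]_d) (hH : adjoint H = H)
  (rho : 'M[R[i]]_d) (O : 'I_N -> 'M[R[i]]_d) :
  inner (choi (adjoint (tensor_op O)))
        (choi (slice_op (Ordinal hN) rho *m eiS_tilde (Ordinal hN) eps H))
  = \tr (rho *m \big[mulmx/1%:M]_(t < N)
                   heis H (eps * (rev_ord t : nat)%:R) (O (rev_ord t))).
Proof.
destruct d as [|d']; first by [].
destruct N as [|n]; first by [].
set t0 := Ordinal hN.
have ht0 : t0 = ord0 by apply: val_inj.
rewrite inner_tr /eiS_tilde /eiS sliceZ mexp_slice.
under eq_bigr => t _ do rewrite sliceZ mexp_slice UE.
under [in RHS]eq_bigr => t _ do rewrite heisE.
rewrite big_slices.
rewrite -[mexp ((iC R * _) *: H)]/(Ex H _).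
have FF := EE H; have F0 := E0 H.
move: (Ex H) FF F0 => F FF F0.
rewrite !slice_tensor !tensor_mulA tr_tcs'.
set On := fun k : nat => O (inord k).
set M := fun k : nat => F (- eps) *m (O (inord k) *m
   (if inord k == t0 then rho else 1%:M) *m (if inord k == t0 then F (eps * n.+1%:R) else 1%:M)).
rewrite (eq_bigr (fun c : Idx d'.+1 n.+1 => \prod_(t < n.+1) M t (c t) (c (ord_pred t)))); last first.
  by move=> c _; apply: eq_bigr => t _; rewrite /M inord_val.
rewrite cycI.
rewrite (Pm_ext (M' := fun k => F (- eps) *m On k.+1)); last first.
  move=> k hk; rewrite /M /On.
  have -> : (inord k.+1 == t0) = false.
    apply/negbTE; rewrite ht0; apply/eqP => /(congr1 val); rewrite /= inordK //.
  by rewrite !mulmx1.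
have h0 : (inord 0 : 'I_n.+1) == t0 by rewrite ht0; apply/eqP; apply: val_inj; rewrite /= inordK.
rewrite /M h0 -/(On 0) trace4.
congr (\tr (_ *m _)).
rewrite KL // mulmxA FF addrN F0 mul1mx Pm_big.
apply: eq_bigr => t _; rewrite /G /On.
by rewrite -[(n.+1 - t.+1)%N]/(rev_ord t : nat) inord_val.
Qed.
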